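(* Let $\varepsilon\in[0,1)$ and $\mathcal{P},\mathcal{E}\subseteq\mathcal{D}(P)$. Then $$\beta W_{\mathrm{GPO},\varepsilon}(\mathcal{P},\mathcal{E})=D^{\mathcal{E}}_{\min,\varepsilon}(\mathcal{P}\|\mathcal{E}).$$
   Context: All Hilbert spaces are finite-dimensional; $\mathcal{D}(P)$ is the set of density operators on $P$; $T(X,Y)=\tfrac12\|X-Y\|_1$. Battery: qubit $B$ with basis $\{|0\rangle,|1\rangle\}$, $\pi_M=(1-\tfrac1M)|0\rangle\langle0|+\tfrac1M|1\rangle\langle1|$ for $M>1$. For a class of maps $\mathfrak{F}$, the one-shot extractable work into a clean battery is $\beta W_{\mathfrak{F},\varepsilon}(\mathcal{P},\mathcal{E})=\log\sup\{M>1:\exists\mathcal{F}\in\mathfrak{F}\text{ with } T(\mathcal{F}(\rho),|1\rangle\langle1|)\le\varepsilon\ \forall\rho\in\mathcal{P}\text{ and }\mathcal{F}(\tau)=\pi_M\ \forall\tau\in\mathcal{E}\}$. GPO (Gibbs-preserving operations) here means the class of CPTP maps, the Gibbs-preservation requirement being exactly the condition $\mathcal{F}(\tau)=\pi_M$ for all $\tau\in\mathcal{E}$. For $\mathcal{K}$ a set of operators, $V(\mathcal{K})=\operatorname{span}\{\tau-\tau':\tau,\tau'\in\mathcal{K}\}$, and $E\perp V(\mathcal{K})$ means $\operatorname{tr}[EX]=0$ for all $X\in V(\mathcal{K})$. The subspace-constrained min-relative entropy is $$D^{\mathcal{K}}_{\min,\varepsilon}(\mathcal{P}\|\mathcal{E})=-\log\min\Big\{\sup_{\tau\in\mathcal{E}}\operatorname{tr}[\tau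 E]:0\le E\le I,\ E\perp V(\mathcal{K}),\ \sup_{\rho\in\mathcal{P}}\operatorname{tr}[\rho(I-E)]\le\varepsilon\Big\},$$ with $-\log 0=+\infty$. *)

(* Defs.v *)
From HB Require Import structures.
From mathcomp Require Import all_boot all_order all_algebra.
From mathcomp Require Import sesquilinear spectral.
From mathcomp Require Import complex mxtens.
From mathcomp Require Import boolp classical_sets reals ereal exp.

Set Implicit Arguments.
Unset Strict Implicit.
Unset Printing Implicit Defensive.

Import Order.TTheory GRing.Theory Num.Theory.
Local Open Scope ring_scope.
Local Open Scope classical_set_scope.
Local Open Scope sesquilinear_scope.

Section QDefs.
Variable R : realType.
Local Notation C := R[i].

(* Positive semidefinite operator on C^m : Hermitian with <v|A|v> >= 0
   (0 <= z in C means z is real and nonnegative). *)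
Definition psd m (A : 'M[C]_m) : Prop :=
  A = A ^t* /\ forall v : 'cV[C]_m, 0 <= (v ^t* *m A *m v) 0 0.

Definition density n (A : 'M[C]_n) : Prop := psd A /\ \tr A = 1.

Definition effect n (E : 'M[C]_n) : Prop := psd E /\ psd (1%:M - E).

(* Trace norm ||X||_1 = max over unitaries U of |tr(U X)|
   (variational form of tr sqrt(X^* X)). *)
Definition trnorm n (X : 'M[C]_n) : R :=
  sup [set complex.Re `|\tr (U *m X)| | U in [set U : 'M[C]_n | U \is unitarymx]].

Definition tdist n (X Y : 'M[C]_n) : R := trnorm (X - Y) / 2.

(* Amplification (id_k (x) f) of a map f : M_n -> M_p, acting on
   operators on C^k (x) C^n (tensor index convention of mxtens). *)
Definition mxblock_of k n (X : 'M[C]_(k * n)) (i j : 'I_k) : 'M[C]_n :=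
  \matrix_(a, b) X (mxtens_index (i, a)) (mxtens_index (j, b)).

Definition ampl k n p (f : 'M[C]_n -> 'M[C]_p) (X : 'M[C]_(k * n))
  : 'M[C]_(k * p) :=
  \sum_(i < k) \sum_(j < k) (delta_mx i j *t f (mxblock_of X i j)).

Definition cptp n p (f : 'M[C]_n -> 'M[C]_p) : Prop :=
  (forall (a : C) (X Y : 'M[C]_n), f (a *: X + Y) = a *: f X + f Y) /\
  (forall (k : nat) (X : 'M[C]_(k * n)), psd X -> psd (ampl f X)) /\
  (forall X : 'M[C]_n, \tr (f X) = \tr X).

(* Battery qubit: |1><1| and pi_M = (1 - 1/M)|0><0| + (1/M)|1><1|. *)
Definition ket1proj : 'M[C]_2 := delta_mx 1 1.
Definition piM (M : R) : 'M[C]_2 :=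
  ((1 - M^-1)%:C)%C *: delta_mx 0 0 + ((M^-1)%:C)%C *: delta_mx 1 1.

Definition gpo_feasible n (eps : R) (P E : set 'M[C]_n) (M : R) : Prop :=
  1 < M /\ exists f : 'M[C]_n -> 'M[C]_2, cptp f /\
    (forall rho, P rho -> tdist (f rho) ket1proj <= eps) /\
    (forall tau, E tau -> f tau = piM M).

(* beta W_{GPO,eps}(P,E) = log sup{M > 1 : ...}; the sup is taken in
   [1, +oo] (empty set gives 1, i.e. work 0). *)
Definition betaW_GPO n (eps : R) (P E : set 'M[C]_n) : \bar R :=
  lne (ereal_sup (1%:E |` [set M%:E | M in gpo_feasible eps P E])).

Definition Vspan n (K : set 'M[C]_n) : set 'M[C]_n :=
  [set X | exists s : seq (C * 'M[C]_n * 'M[C]_n),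
     (forall t, t \in s -> K t.1.2 /\ K t.2) /\
     X = \sum_(t <- s) t.1.1 *: (t.1.2 - t.2)].

Definition perpV n (E : 'M[C]_n) (K : set 'M[C]_n) : Prop :=
  forall X, Vspan K X -> \tr (E *m X) = 0.

Definition Dmin_feasible n (K : set 'M[C]_n) (eps : R) (P : set 'M[C]_n)
  (E : 'M[C]_n) : Prop :=
  effect E /\ perpV E K /\
  (forall rho, P rho -> complex.Re (\tr (rho *m (1%:M - E))) <= eps).

Definition sup_tr n (Ecal : set 'M[C]_n) (E : 'M[C]_n) : \bar R :=
  ereal_sup [set (complex.Re (\tr (tau *m E)))%:E | tau in Ecal].

(* D^K_{min,eps}(P || Ecal) = - log min { ... }, with -log 0 = +oo. *)
Definition Dmin n (K : set 'M[C]_n) (eps : R) (P Ecal : set 'M[C]_n)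
  : \bar R :=
  (- lne (ereal_inf [set sup_tr Ecal E | E in Dmin_feasible K eps P]))%E.

End QDefs.

(* Main.v *)
Require Import Defs.
From HB Require Import structures.
From mathcomp Require Import all_boot all_order all_algebra.
From mathcomp Require Import sesquilinear spectral.
From mathcomp Require Import complex mxtens.
From mathcomp Require Import boolp classical_sets reals ereal exp.
From mathcomp Require Import ring lra.
Import Order.TTheory GRing.Theory Num.Theory.
Local Open Scope ring_scope.
Local Open Scope classical_set_scope.
Local Open Scope sesquilinear_scope.
Set Implicit Arguments. Unset Strict Implicit. Unset Printing Implicit Defensive.

Section Gen.
Variable C : numClosedFieldType.

Definition bf n (A : 'M[C]_n) (u w : 'cV[C]_n) : C := (u ^t* *m A *m w) 0 0.

Lemma bf_delta n (A : 'M[C]_n) (i j : 'I_n) : bf A (delta_mx i 0) (delta_mx j 0) = A i j.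
Proof.
rewrite /bf.
have -> : (delta_mx i 0 : 'cV[C]_n) ^t* = delta_mx 0 i.
  by apply/matrixP => a b; rewrite !mxE conjC_nat eq_sym andbC.
by rewrite -rowE -colE !mxE.
Qed.

Lemma tCD n (u w : 'cV[C]_n) : (u + w) ^t* = u ^t* + w ^t*.
Proof. by apply/matrixP => a b; rewrite !mxE rmorphD. Qed.

Lemma tCZ n (c : C) (u : 'cV[C]_n) : (c *: u) ^t* = c^* *: u ^t*.
Proof. by apply/matrixP => a b; rewrite !mxE rmorphM. Qed.

Lemma bfDl n (A : 'M[C]_n) u v w : bf A (u + v) w = bf A u w + bf A v w.
Proof. by rewrite /bf tCD !mulmxDl !mxE. Qed.
Lemma bfDr n (A : 'M[C]_n) u v w : bf A w (u + v) = bf A w u + bf A w v.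
Proof. by rewrite /bf !mulmxDr !mxE. Qed.
Lemma bfZl n (A : 'M[C]_n) c u w : bf A (c *: u) w = c^* * bf A u w.
Proof. by rewrite /bf tCZ -!scalemxAl !mxE. Qed.
Lemma bfZr n (A : 'M[C]_n) c u w : bf A u (c *: w) = c * bf A u w.
Proof. by rewrite /bf -!scalemxAr !mxE. Qed.

Lemma polar n (A : 'M[C]_n) : (forall v, 0 <= bf A v v) -> A = A ^t*.
Proof.
move=> H; apply/matrixP => i j; rewrite !mxE.
pose e k : 'cV[C]_n := delta_mx k 0.
have R1 : forall v, (bf A v v)^* = bf A v v by move=> v; apply/CrealP/ger0_real/H.
have h1 := R1 (e i + e j); have h2 := R1 (e i + 'i *: e j).
rewrite !(bfDl, bfDr, bfZl, bfZr, bf_delta) in h1 h2.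
have hi := R1 (e i); have hj := R1 (e j).
rewrite !bf_delta in hi hj.
rewrite !rmorphD /= hi hj in h1.
rewrite !rmorphD !rmorphM /= hi hj conjCi in h2; rewrite rmorphN /= conjCi opprK in h2.
set x := A i j in h1 h2 *; set y := A j i in h1 h2 *.
move/eqP: h1; rewrite -subr_eq0 => /eqP h1.
move/eqP: h2; rewrite -subr_eq0 => /eqP h2.
have E2 : 'i * (y^* - x^* - x + y) = 0 by rewrite -h2; ring.
move/eqP: E2; rewrite mulf_eq0 (negbTE (neq0Ci C)) /= => /eqP E2.
set L1 := (_ - _) in h1.
have E3 : 2%:R * (x - y^*) = - L1 - (y^* - x^* - x + y) by rewrite /L1; ring.
rewrite h1 E2 oppr0 addr0 in E3.
move/eqP: E3; rewrite mulf_eq0 pnatr_eq0 /= subr_eq0 => /eqP //.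
Qed.

Lemma conj_entry n m (X : 'M[C]_(m, n)) (A : 'M[C]_n) k :
  (X *m A *m X ^t*) k k = bf A ((row k X) ^t*) ((row k X) ^t*).
Proof.
rewrite /bf trmxCK !mxE; apply: eq_bigr => j _; rewrite !mxE; congr (_ * _).
by apply: eq_bigr => l _; rewrite !mxE.
Qed.

Lemma tr_psd_ge0 n (A B : 'M[C]_n) : (forall v, 0 <= bf A v v) ->
  (forall v, 0 <= bf B v v) -> B = B ^t* -> 0 <= \tr (A *m B).
Proof.
move=> HA HB hB.
have Bn : B \is normalmx by apply/normalmxP; rewrite -hB.
have U := spectral_unitarymx B.
have EB := orthomx_spectralP Bn; rewrite invmx_unitary // in EB.
set P := spectralmx B in U EB; set d := spectral_diag B in EB.
have ED : P *m B *m P ^t* = diag_mx d.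
  by rewrite EB !mulmxA (unitarymxP U) mul1mx -mulmxA (unitarymxP U) mulmx1.
rewrite EB !mulmxA mxtrace_mulC !mulmxA mul_mx_diag /mxtrace.
apply: sumr_ge0 => k _; rewrite mxE; apply: mulr_ge0.
  by rewrite conj_entry.
move/matrixP: ED => /(_ k k); rewrite conj_entry mxE eqxx mulr1n => <-.
exact: HB.
Qed.

Lemma bfE n (A : 'M[C]_n) u w :
  bf A u w = \sum_r \sum_s (u r 0)^* * A r s * w s 0.
Proof.
rewrite /bf mxE (exchange_big) /=; apply: eq_bigr => r _.
rewrite mxE mulr_suml; apply: eq_bigr => s _; rewrite !mxE.
by [].
Qed.

Lemma sum_tens k m (F : 'I_(k * m) -> C) :
  \sum_r F r = \sum_(i < k) \sum_(a < m) F (mxtens_index (i, a)).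
Proof.
rewrite (reindex (@mxtens_index k m)) /=; last first.
  by exists (@mxtens_unindex k m) => x _; [apply: mxtens_indexK | apply: mxtens_unindexK].
rewrite pair_big /=; apply: eq_bigr => -[i a] _ //.
Qed.
End Gen.

Section Spec.
Variable R : realType.
Local Notation C := R[i].
Local Notation idx := mxtens_index.

Lemma psdP m (A : 'M[C]_m) : psd A <-> forall v, 0 <= bf A v v.
Proof.
split=> [[_ H] v|H]; first exact: H.
by split; [apply: polar | exact: H].
Qed.

Lemma ampl_entry k n p (f : 'M[C]_n -> 'M[C]_p) (X : 'M[C]_(k * n)) i a j b :
  ampl f X (idx (i, a)) (idx (j, b)) = f (mxblock_of X i j) a b.
Proof.
rewrite /ampl summxE (bigD1 i) //= [Y in _ + Y]big1 => [|i' ne]; last first.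
  rewrite summxE big1 // => j' _; rewrite tensmxE mxE.
  by rewrite eq_sym (negbTE ne) mul0r.
rewrite addr0 summxE (bigD1 j) //= [Y in _ + Y]big1 => [|j' ne]; last first.
  by rewrite tensmxE mxE eqxx /= eq_sym (negbTE ne) mul0r.
by rewrite tensmxE mxE !eqxx mul1r !addr0.
Qed.

Lemma bf_ampl k n p (f : 'M[C]_n -> 'M[C]_p) (X : 'M[C]_(k * n)) v :
  bf (ampl f X) v v = \sum_i \sum_j \sum_a \sum_b
    (v (idx (i, a)) 0)^* * f (mxblock_of X i j) a b * v (idx (j, b)) 0.
Proof.
rewrite bfE sum_tens; apply: eq_bigr => i _.
under eq_bigr => a _ do rewrite sum_tens.
rewrite exchange_big /=; apply: eq_bigr => j _; apply: eq_bigr => a _.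
by apply: eq_bigr => b _; rewrite ampl_entry.
Qed.


Local Notation unidx := (@mxtens_unindex _ _).

Lemma cp_pos n p (f : 'M[C]_n -> 'M[C]_p) :
  (forall k (X : 'M[C]_(k * n)), psd X -> psd (ampl f X)) ->
  forall P, psd P -> forall u, 0 <= bf (f P) u u.
Proof.
move=> Hcp P /psdP HP u.
pose X : 'M[C]_(1 * n) := \matrix_(r, s) P (unidx r).2 (unidx s).2.
have HX : psd X.
  apply/psdP => v; rewrite bfE sum_tens big_ord1.
  under eq_bigr do rewrite sum_tens big_ord1.
  have := HP (\col_a v (idx (ord0, a)) 0); rewrite bfE.
  congr (_ <= _); apply: eq_bigr => a _; apply: eq_bigr => b _.
  by rewrite !mxE !mxtens_indexK.
have := (psdP _).1 (Hcp 1%N X HX) (\col_r u (unidx r).2 0).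
rewrite bf_ampl !big_ord1.
have -> : mxblock_of X ord0 ord0 = P by apply/matrixP => a b; rewrite !mxE !mxtens_indexK.
rewrite bfE; congr (_ <= _); apply: eq_bigr => a _; apply: eq_bigr => b _.
by rewrite !mxE !mxtens_indexK.
Qed.


Lemma sum_delta m (a : 'I_m) (F : 'I_m -> C) : \sum_b (a == b)%:R * F b = F a.
Proof.
rewrite (bigD1 a) //= eqxx mul1r big1 ?addr0 // => b ne.
by rewrite eq_sym (negbTE ne) mul0r.
Qed.

Definition mp n (G : 'I_2 -> 'M[C]_n) (Y : 'M[C]_n) : 'M[C]_2 :=
  \sum_(c < 2) \tr (G c *m Y) *: delta_mx c c.

Lemma mp_entry n (G : 'I_2 -> 'M[C]_n) Y a b :
  mp G Y a b = (a == b)%:R * \tr (G a *m Y).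
Proof.
rewrite /mp summxE (bigD1 a) //= big1 => [|c ne]; last first.
  by rewrite !mxE [a == c]eq_sym (negbTE ne) mulr0.
rewrite !mxE (eqxx a) /= addr0 eq_sym mulrC //.
Qed.

Lemma blk_psd k n (X : 'M[C]_(k * n)) (w : 'I_k -> C) :
  (forall v, 0 <= bf X v v) ->
  forall u, 0 <= bf (\sum_i \sum_j ((w i)^* * w j) *: mxblock_of X i j) u u.
Proof.
move=> HX u.
have := HX (\col_r (w (unidx r).1 * u (unidx r).2 0)).
rewrite bfE sum_tens; under eq_bigr => i _ do under eq_bigr => x _ do rewrite sum_tens.
rewrite bfE => H.
under eq_bigr => x _ do under eq_bigr => y _ do rewrite summxE mulr_sumr mulr_suml.
under eq_bigr => x _ do under eq_bigr => y _ do under eq_bigr => i _ do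
  rewrite summxE mulr_sumr mulr_suml.
under eq_bigr => x _ do rewrite exchange_big.
rewrite exchange_big.
under eq_bigr => i _ do under eq_bigr => x _ do rewrite exchange_big.
apply: (le_trans H); rewrite le_eqVlt; apply/orP; left; apply/eqP.
apply: eq_bigr => i _; apply: eq_bigr => x _; apply: eq_bigr => j _; apply: eq_bigr => y _.
rewrite !mxE !mxtens_indexK /= rmorphM /=; ring.
Qed.

Lemma mp_cp n (G : 'I_2 -> 'M[C]_n) : (forall c, psd (G c)) ->
  forall k (X : 'M[C]_(k * n)), psd X -> psd (ampl (mp G) X).
Proof.
move=> HG k X /psdP HX; apply/psdP => v; rewrite bf_ampl.
under eq_bigr => i _ do under eq_bigr => j _ do under eq_bigr => a _ do
  under eq_bigr => b _ do rewrite mp_entry mulrA [_ * (_%:R)]mulrC -!mulrA.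
under eq_bigr => i _ do under eq_bigr => j _ do under eq_bigr => a _ do
  rewrite (sum_delta a (fun b => _ * (_ * v (idx (j, b)) 0))).
rewrite exchange_big /=.
under eq_bigr => j _ do rewrite exchange_big.
rewrite exchange_big /=; apply: sumr_ge0 => a _.
have HZ := blk_psd (fun i => v (idx (i, a)) 0) HX.
have := tr_psd_ge0 ((psdP _).1 (HG a)) HZ (polar HZ).
set Z := (\sum_i _).
have -> : \tr (G a *m Z) = \sum_i \sum_j ((v (idx (i, a)) 0)^* * v (idx (j, a)) 0) *
   \tr (G a *m mxblock_of X i j).
  rewrite /Z mulmx_sumr raddf_sum; apply: eq_bigr => i _.
  rewrite mulmx_sumr raddf_sum; apply: eq_bigr => j _.
  by rewrite -scalemxAr /= mxtraceZ.
rewrite [Y in _ -> _ <= Y]exchange_big.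
congr (_ <= _); apply: eq_bigr => i _; apply: eq_bigr => j _.
by ring.
Qed.


Definition GE n (E : 'M[C]_n) (c : 'I_2) : 'M[C]_n :=
  if (c : nat) == 1%N then E else 1%:M - E.

Lemma mp_cptp n (E : 'M[C]_n) : effect E -> cptp (mp (GE E)).
Proof.
move=> [HE HE']; split; [|split].
- move=> s X Y; apply/matrixP => a b; rewrite !mxE !mp_entry.
  by rewrite mulmxDr -scalemxAr mxtraceD mxtraceZ; ring.
- apply: mp_cp => c; rewrite /GE; case: ifP => _ //.
- move=> X; rewrite /mxtrace !big_ord_recl big_ord0 !mp_entry !eqxx /GE /=.
  by rewrite mulmxBl mul1mx linearB /= !mul1r addr0 subrK.
Qed.


Lemma Re_le (x y : C) : x <= y -> complex.Re x <= complex.Re y.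
Proof. by rewrite lecE => /andP[]. Qed.

Lemma Re_norm_ge (z : C) : complex.Re z <= complex.Re `|z|.
Proof.
case: z => a b; rewrite normc_def /=.
apply: le_trans (ler_norm _) _; rewrite -sqrtr_sqr; apply: ler_wsqrtr.
by rewrite lerDl sqr_ge0.
Qed.

Lemma unitary_entry m (U : 'M[C]_m) i j : U \is unitarymx -> `|U i j| <= 1.
Proof.
move/unitarymxP/matrixP/(_ i i); rewrite !mxE eqxx mulr1n => H.
have : `|U i j| ^+ 2 <= 1.
  rewrite -H normCK (bigD1 j) //= !mxE lerDl; apply: sumr_ge0 => k _.
  by rewrite !mxE mul_conjC_ge0.
by rewrite expr_le1.
Qed.

Lemma tr_bound n (X U : 'M[C]_n) : U \is unitarymx ->
  `|\tr (U *m X)| <= \sum_i \sum_j `|X j i|.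
Proof.
move=> HU; rewrite /mxtrace.
apply: le_trans (ler_norm_sum _ _ _) _; apply: ler_sum => i _.
rewrite mxE; apply: le_trans (ler_norm_sum _ _ _) _; apply: ler_sum => j _.
rewrite normrM; apply: ler_piMl => //; exact: unitary_entry.
Qed.

Lemma unitary1 n : (1%:M : 'M[C]_n) \is unitarymx.
Proof. by apply/unitarymxP; rewrite trmx1 map_mx1 mulmx1. Qed.

Lemma trnorm_ub n (X U : 'M[C]_n) : U \is unitarymx ->
  complex.Re `|\tr (U *m X)| <= trnorm X.
Proof.
move=> HU; rewrite /trnorm; apply: ub_le_sup; last by exists U.
exists (complex.Re (\sum_i \sum_j `|X j i|)) => _ [V HV <-].
by apply: Re_le; apply: tr_bound.
Qed.

Lemma trnorm_le n (X : 'M[C]_n) b :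
  (forall U, U \is unitarymx -> complex.Re `|\tr (U *m X)| <= b) -> trnorm X <= b.
Proof.
move=> H; rewrite /trnorm; apply: ge_sup; first by exists (complex.Re `|\tr (1%:M *m X)|), 1%:M => //; apply: unitary1.
by move=> _ [V HV <-]; apply: H.
Qed.


Lemma mp_dist n (E rho : 'M[C]_n) : effect E -> density rho ->
  tdist (mp (GE E) rho) (ket1proj R) <= complex.Re (\tr (rho *m (1%:M - E))).
Proof.
move=> [HE HE'] [Hr Htr].
rewrite mxtrace_mulC; set q := \tr ((1%:M - E) *m rho).
have Hq : 0 <= q by apply: tr_psd_ge0; [exact: (psdP _).1 HE' | exact: (psdP _).1 Hr | exact: Hr.1].
have trE : \tr (E *m rho) = 1 - q by rewrite /q mulmxBl mul1mx linearB /= Htr opprB addrC subrK.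
have D : mp (GE E) rho - ket1proj R = diag_mx (\row_a (if (a : nat) == 1%N then - q else q)).
  apply/matrixP => a b; rewrite !mxE mp_entry /GE.
  case: a => [[|[|//]] Ha]; case: b => [[|[|//]] Hb] /=.
  all: rewrite -/q ?trE ?mul1r ?mul0r ?subr0 ?mulr0n ?mulr1n //. rewrite addrC addKr //.
rewrite /tdist D ler_pdivrMr //; apply: trnorm_le => U HU.
have T : \tr (U *m diag_mx (\row_a (if (a : nat) == 1%N then - q else q))) =
    U ord0 ord0 * q - U (lift ord0 ord0) (lift ord0 ord0) * q.
  by rewrite mul_mx_diag /mxtrace !big_ord_recl big_ord0 !mxE /= addr0 mulrN.
have H : `|U ord0 ord0 * q - U (lift ord0 ord0) (lift ord0 ord0) * q| <= q + q.
  apply: le_trans (ler_normB _ _) _; rewrite !normrM (ger0_norm Hq).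
  by apply: lerD; apply: ler_piMl => //; apply: unitary_entry.
rewrite T; apply: le_trans (Re_le H) _.
by rewrite raddfD /= mulr_natr mulr2n.
Qed.


Lemma mp_pi n (E tau : 'M[C]_n) (M : R) : \tr tau = 1 ->
  \tr (E *m tau) = ((M^-1)%:C)%C -> mp (GE E) tau = piM M.
Proof.
move=> Htr HE.
have H0 : \tr ((1%:M - E) *m tau) = 1 - ((M^-1)%:C)%C
  by rewrite mulmxBl mul1mx linearB /= Htr HE.
apply/matrixP => a b; rewrite /piM !mxE mp_entry /GE.
case: a => [[|[|//]] Ha]; case: b => [[|[|//]] Hb] /=.
all: by rewrite ?H0 ?HE ?mul1r ?mul0r ?mulr1 ?mulr0 ?addr0 ?add0r ?rmorphB ?rmorph1.
Qed.

Lemma bf_tr n (A : 'M[C]_n) v : bf A v v = \tr (A *m (v *m v ^t*)).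
Proof. by rewrite /bf mulmxA mxtrace_mulC mulmxA trace_mx11. Qed.

Lemma bfB n (A B : 'M[C]_n) u : bf (A - B) u u = bf A u u - bf B u u.
Proof. by rewrite /bf mulmxBr mulmxBl !mxE. Qed.

Lemma rank1_psd n (v : 'cV[C]_n) : psd (v *m v ^t*).
Proof.
apply/psdP => u; rewrite /bf !mulmxA -mulmxA mxE big_ord1.
have -> : (v ^t* *m u) 0 0 = ((u ^t* *m v) 0 0)^*.
  rewrite !mxE rmorph_sum; apply: eq_bigr => i _.
  by rewrite !mxE rmorphM /= conjCK mulrC.
exact: mul_conjC_ge0.
Qed.


Lemma lift01 : lift ord0 ord0 = 1 :> 'I_2.
Proof. by apply/val_inj. Qed.

Section Conv.
Variables (n : nat) (f : 'M[C]_n -> 'M[C]_2) (Hf : cptp f).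

Lemma f0 : f 0 = 0.
Proof.
have := Hf.1 1 0 0; rewrite !scale1r addr0 => H.
by apply: (@addrI _ (f 0)); rewrite addr0 -{1}H.
Qed.

Lemma fD X Y : f (X + Y) = f X + f Y.
Proof. by have := Hf.1 1 X Y; rewrite !scale1r. Qed.

Lemma fZ a X : f (a *: X) = a *: f X.
Proof. by have := Hf.1 a X 0; rewrite !addr0 f0 addr0. Qed.

Definition Ef : 'M[C]_n := \matrix_(a, b) f (delta_mx b a) 1 1.

Lemma trEf X : \tr (Ef *m X) = f X 1 1.
Proof.
rewrite {2}(matrix_sum_delta X) (big_morph f fD f0) summxE.
under eq_bigr => i _ do rewrite (big_morph f fD f0) summxE.
rewrite /mxtrace [in RHS]exchange_big /=; apply: eq_bigr => a _.
rewrite mxE; apply: eq_bigr => b _.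
by rewrite fZ !mxE mulrC.
Qed.

Lemma Ef_effect : effect Ef.
Proof.
split; apply/psdP => v.
  rewrite bf_tr trEf; have := cp_pos Hf.2.1 (rank1_psd v) (delta_mx 1 0).
  by rewrite bf_delta.
rewrite bfB !bf_tr mul1mx trEf -Hf.2.2.
have := cp_pos Hf.2.1 (rank1_psd v) (delta_mx 0 0); rewrite bf_delta.
rewrite /mxtrace !big_ord_recl big_ord0 addr0.
by rewrite lift01 addrK.
Qed.


Lemma tdist_lb rho : \tr rho = 1 ->
  complex.Re (1 - f rho 1 1) <= tdist (f rho) (ket1proj R).
Proof.
move=> Htr.
have Hs : f rho 0 0 + f rho 1 1 = 1.
  by have := Hf.2.2 rho; rewrite Htr /mxtrace !big_ord_recl big_ord0 addr0 lift01.
pose U : 'M[C]_2 := delta_mx 0 0 - delta_mx 1 1.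
have HU : U \is unitarymx.
  apply/unitarymxP/matrixP => a b; rewrite !mxE !big_ord_recl big_ord0 !mxE.
  case: a => [[|[|//]] Ha]; case: b => [[|[|//]] Hb] /=.
  all: rewrite ?subr0 ?sub0r ?rmorphN ?conjC1 ?conjC0 ?mulr0 ?mul0r ?mulr1 ?addr0 ?add0r ?mulrNN ?mul1r ?rmorph1. all: try done.
have T : \tr (U *m (f rho - ket1proj R)) = 2%:R * (1 - f rho 1 1).
  rewrite /mxtrace !big_ord_recl big_ord0 !mxE !big_ord_recl !big_ord0 !mxE /= lift01.
  have h00 : f rho 0 0 = 1 - f rho 1 1 by rewrite -Hs addrK.
  rewrite h00; ring.
rewrite /tdist ler_pdivlMr //; apply: le_trans _ (trnorm_ub _ HU).
rewrite T; apply: le_trans _ (Re_norm_ge _).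
by rewrite mulr_natl raddfMn /= mulr_natr.
Qed.

End Conv.


Lemma ReM_real (r : R) (z : C) : complex.Re ((r%:C)%C * z) = r * complex.Re z.
Proof. by case: z => a b /=; rewrite mul0r subr0. Qed.

Lemma Re_real (r : R) : complex.Re ((r%:C)%C) = r.
Proof. by []. Qed.

Lemma ge0_real (z : C) : 0 <= z -> z = ((complex.Re z)%:C)%C.
Proof. by move=> /ger0_Im; case: z => a b /= ->. Qed.

Lemma bf1_ge0 n (v : 'cV[C]_n) : 0 <= bf 1%:M v v.
Proof.
rewrite /bf mulmx1 mxE; apply: sumr_ge0 => i _.
by rewrite !mxE mulrC mul_conjC_ge0.
Qed.


Lemma bfAD n (A B : 'M[C]_n) u : bf (A + B) u u = bf A u u + bf B u u.
Proof. by rewrite /bf mulmxDr mulmxDl !mxE. Qed.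

Lemma bfAZ n (c : C) (A : 'M[C]_n) u : bf (c *: A) u u = c * bf A u u.
Proof. by rewrite /bf -scalemxAr -scalemxAl !mxE. Qed.

Section Main.
Variables (n : nat) (eps : R) (P Ecal : set 'M[C]_n).
Hypotheses (Heps : 0 <= eps) (HP : P `<=` @density R n) (HE : Ecal `<=` @density R n).

Lemma Vspan_tr X : Vspan Ecal X -> \tr X = 0.
Proof.
move=> [s [Hs ->]]; rewrite raddf_sum /= big_seq big1 // => t /Hs [h1 h2].
by rewrite linearZ /= linearB /= (HE h1).2 (HE h2).2 subrr mulr0.
Qed.

Lemma effect1 : effect (1%:M : 'M[C]_n).
Proof.
split; apply/psdP => v; first exact: bf1_ge0.
by rewrite subrr /bf mulmx0 mul0mx mxE.
Qed.

Lemma feas1 : Dmin_feasible Ecal eps P 1%:M.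
Proof.
split; first exact: effect1.
split; first by move=> X HX; rewrite mul1mx; exact: Vspan_tr.
by move=> rho _; rewrite subrr mulmx0 mxtrace0.
Qed.

Definition mix (l : R) (E : 'M[C]_n) := (l%:C)%C *: E + ((1 - l)%:C)%C *: 1%:M.

Lemma feas_mix E (l : R) : Dmin_feasible Ecal eps P E -> 0 <= l -> l <= 1 ->
  Dmin_feasible Ecal eps P (mix l E).
Proof.
move=> [[HE1 HE2] [Hperp Herr]] l0 l1.
have e1 : 1%:M - mix l E = (l%:C)%C *: (1%:M - E).
  apply/matrixP => i j; rewrite !mxE rmorphB rmorph1 /=; ring.
split; [split|split].
- apply/psdP => v; rewrite bfAD !bfAZ; apply: addr_ge0; apply: mulr_ge0.
  + by rewrite lecR.
  + exact: ((psdP _).1 HE1 v).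
  + by rewrite lecR subr_ge0.
  + exact: bf1_ge0.
- rewrite e1; apply/psdP => v; rewrite bfAZ; apply: mulr_ge0; first by rewrite lecR.
  exact: ((psdP _).1 HE2 v).
- move=> X HX; rewrite /mix mulmxDl -!scalemxAl mul1mx mxtraceD !mxtraceZ.
  by rewrite Hperp // Vspan_tr // !mulr0 addr0.
- move=> rho Hr; rewrite e1 -scalemxAr mxtraceZ ReM_real.
  apply: le_trans (ler_wpM2l l0 (Herr _ Hr)) _.
  by rewrite ler_piMl.
Qed.

Lemma tr_mix l E tau : Ecal tau ->
  \tr (mix l E *m tau) = (l%:C)%C * \tr (E *m tau) + ((1 - l)%:C)%C.
Proof.
move=> Ht; rewrite /mix mulmxDl -!scalemxAl mul1mx mxtraceD !mxtraceZ.
by rewrite (HE Ht).2 mulr1.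
Qed.


Lemma ach E (M : R) : effect E ->
  (forall rho, P rho -> complex.Re (\tr (rho *m (1%:M - E))) <= eps) ->
  (forall tau, Ecal tau -> \tr (E *m tau) = ((M^-1)%:C)%C) -> 1 < M ->
  gpo_feasible eps P Ecal M.
Proof.
move=> HE' Herr Htau M1; split => //; exists (mp (GE E)); split; first exact: mp_cptp.
split.
- by move=> rho Hr; apply: le_trans (mp_dist HE' (HP Hr)) (Herr _ Hr).
- by move=> tau Ht; apply: mp_pi; [exact: (HE Ht).2 | exact: Htau].
Qed.

Lemma piM11 (M : R) : piM M 1 1 = ((M^-1)%:C)%C.
Proof. by rewrite /piM !mxE /= mulr0 add0r mulr1. Qed.

Lemma conv M : gpo_feasible eps P Ecal M -> exists E',
  Dmin_feasible Ecal eps P E' /\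
  forall tau, Ecal tau -> \tr (tau *m E') = ((M^-1)%:C)%C.
Proof.
move=> [M1 [f [Hf [Hd Hpi]]]]; exists (Ef f).
have fB : forall X Y, f (X - Y) = f X - f Y.
  move=> X Y; have := Hf.1 (-1) Y X; rewrite !scaleN1r => H.
  by rewrite addrC H addrC.
split; last by move=> tau Ht; rewrite mxtrace_mulC trEf // Hpi // piM11.
split; first exact: Ef_effect.
split.
- move=> X [s [Hs ->]]; rewrite trEf // (big_morph f (fD Hf) (f0 Hf)) big_seq big1 ?mxE //.
  by move=> t /Hs [h1 h2]; rewrite fZ // fB Hpi // Hpi // subrr scaler0.
- move=> rho Hr; rewrite mxtrace_mulC mulmxBl mul1mx linearB /= trEf // (HP Hr).2.
  exact: le_trans (tdist_lb Hf (HP Hr).2) (Hd _ Hr).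
Qed.


Lemma tr_const E tau0 tau : Dmin_feasible Ecal eps P E -> Ecal tau0 -> Ecal tau ->
  \tr (tau *m E) = \tr (tau0 *m E).
Proof.
move=> [_ [Hperp _]] H0 H1.
have HV : Vspan Ecal (tau - tau0).
  exists [:: (1, tau, tau0)]; split; first by move=> t; rewrite inE => /eqP ->.
  by rewrite big_seq1 scale1r.
have := Hperp _ HV; rewrite mulmxBr linearB /= => /eqP; rewrite subr_eq0 => /eqP.
by rewrite mxtrace_mulC [in RHS]mxtrace_mulC.
Qed.

Lemma sup_tr_val E tau0 : Dmin_feasible Ecal eps P E -> Ecal tau0 ->
  sup_tr Ecal E = (complex.Re (\tr (tau0 *m E)))%:E.
Proof.
move=> HF H0; rewrite /sup_tr.
have -> : [set (complex.Re (\tr (tau *m E)))%:E | tau in Ecal] =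
  [set (complex.Re (\tr (tau0 *m E)))%:E].
  apply/seteqP; split => x.
    by move=> [tau Ht <-]; rewrite (tr_const HF H0 Ht).
  by move=> ->; exists tau0.
exact: ereal_sup1.
Qed.

Lemma tval_ge0 E tau0 : Dmin_feasible Ecal eps P E -> Ecal tau0 ->
  0 <= \tr (tau0 *m E).
Proof.
move=> [[HE1 _] _] H0; have [Hr _] := HE H0.
by apply: tr_psd_ge0; [exact: (psdP _).1 Hr | exact: (psdP _).1 HE1 | exact: HE1.1].
Qed.

Lemma G_of_T E tau0 (t' : R) : Dmin_feasible Ecal eps P E -> Ecal tau0 ->
  complex.Re (\tr (tau0 *m E)) <= t' -> 0 < t' -> t' < 1 ->
  gpo_feasible eps P Ecal t'^-1.
Proof.
move=> HF H0 tt' t'0 t'1.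
set t := complex.Re _ in tt'.
have t1 : t < 1 by apply: le_lt_trans t'1.
have t1' : 0 < 1 - t by rewrite subr_gt0.
pose l := (1 - t') / (1 - t).
have l0 : 0 <= l by apply: divr_ge0; rewrite subr_ge0 ltW.
have l1 : l <= 1 by rewrite ler_pdivrMr // mul1r lerD2l lerN2.
have HF' := feas_mix HF l0 l1.
apply: (ach HF'.1 HF'.2.2).
- move=> tau Ht; rewrite tr_mix // mxtrace_mulC (tr_const HF H0 Ht).
  rewrite (ge0_real (tval_ge0 HF H0)) -/t invrK -rmorphM -rmorphD /=.
  congr ((_ %:C)%C); rewrite /l; field.
  by rewrite lt0r_neq0.
- by rewrite invf_gt1.
Qed.

End Main.

End Spec.

Section Final.
Variable R : realType.
Local Open Scope ereal_scope.

Lemma esup_pinfty (G : set R) :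
  (forall x : R, (1 <= x)%R -> exists2 M, G M & (x < M)%R) ->
  ereal_sup (1%:E |` [set M%:E | M in G]) = +oo.
Proof.
move=> H.
have s1 : 1%:E <= ereal_sup (1%:E |` [set M%:E | M in G]).
  by apply: ereal_sup_ubound; left.
case Hs : (ereal_sup _) s1 => [r| |] //; rewrite lee_fin => r1.
have r1' : (1 <= r + 1)%R by lra.
have [M GM rM] := H (r + 1)%R r1'.
have : M%:E <= ereal_sup (1%:E |` [set M%:E | M in G]).
  by apply: ereal_sup_ubound; right; exists M.
by rewrite Hs lee_fin => HMr; exfalso; clear Hs H; lra.
Qed.


Theorem theorem4' (n : nat) (eps : R) (P E : set 'M[R[i]]_n) :
  (0 <= eps)%R -> (eps < 1)%R ->
  P `<=` @density R n -> E `<=` @density R n ->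
  betaW_GPO eps P E = Dmin E eps P E.
Proof.
move=> He _ HP HE.
rewrite /betaW_GPO /Dmin.
have [[tau0 H0]|E0] := pselect (exists tau0, E tau0); last first.
  rewrite esup_pinfty; last first.
    move=> x x1; exists (x + 1)%R; last by lra.
    apply: (ach HP HE); first exact: effect1.
    - by move=> rho _; rewrite subrr mulmx0 mxtrace0.
    - by move=> tau Ht; exfalso; apply: E0; exists tau.
    - by lra.
  have -> : ereal_inf [set sup_tr E X | X in Dmin_feasible E eps P] = -oo.
    apply/eqP; rewrite -leeNy_eq; apply: ereal_inf_lbound.
    exists 1%:M; first exact: (feas1 P He HE).
    rewrite /sup_tr.
    have -> : [set (complex.Re (\tr (tau *m 1%:M)))%:E | tau in E] = set0.
      by apply/seteqP; split => x // [tau Ht _]; apply: E0; exists tau.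
    exact: ereal_sup0.
  by [].
set S := [set sup_tr E X | X in Dmin_feasible E eps P].
set G := gpo_feasible eps P E.
have Sval : forall y, S y -> exists2 X, Dmin_feasible E eps P X &
    y = (complex.Re (\tr (tau0 *m X)))%:E.
  by move=> y [X HX <-]; exists X => //; exact: sup_tr_val HX H0.
have i_ge0 : 0 <= ereal_inf S.
  apply/ereal_infP => y /Sval [X HX ->]; rewrite lee_fin.
  by have := Re_le (tval_ge0 HE HX H0).
have F1 := feas1 P He HE.
have i_le1 : ereal_inf S <= 1%:E.
  apply: ereal_inf_lbound; exists (1%:M)%R; first exact: F1.
  by rewrite (sup_tr_val F1 H0) mulmx1 (HE _ H0).2.
have K : forall x : R, (1 <= x)%R -> ereal_inf S < (x^-1)%:E ->
    exists2 M, G M & (x < M)%R.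
  move=> x x1 /ereal_inf_lt [y /Sval [X HX ->]]; rewrite lte_fin => tx.
  move: tx; set t := complex.Re _ => tx.
  have t0 : (0 <= t)%R by have := Re_le (tval_ge0 HE HX H0).
  have xi0 : (0 < x^-1)%R by rewrite invr_gt0; lra.
  have xi1 : (x^-1 <= 1)%R by rewrite invf_le1; lra.
  pose t' := ((t + x^-1) / 2)%R.
  have t'0 : (0 < t')%R by rewrite /t'; lra.
  exists (t'^-1)%R.
    by apply: (G_of_T He HP HE HX H0); rewrite /t'; lra.
  rewrite -[x]invrK ltf_pV2 ?posrE //; rewrite /t'; lra.
case Hi : (ereal_inf S) i_ge0 i_le1 => [m| |] //; rewrite !lee_fin => m0 m1.
have [mpos|mle0] := ltP 0%R m; last first.
  rewrite (@le0_lneNy _ m%:E) ?lee_fin // esup_pinfty //.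
  move=> x x1; have xi0 : (0 < x^-1)%R by rewrite invr_gt0; lra.
  have Hlt : ereal_inf S < (x^-1)%:E by rewrite Hi lte_fin; lra.
  by have [M GM xM] := K x x1 Hlt; exists M.
suff -> : ereal_sup (1%:E |` [set M%:E | M in G]) = (m^-1)%:E by rewrite lneV.
apply/eqP; rewrite eq_le; apply/andP; split.
  apply/ereal_supP => y [->|[M GM <-]]; rewrite lee_fin.
    by rewrite invf_ge1.
  have [X [HX Ht]] := conv HP GM.
  have : ereal_inf S <= (M^-1)%:E.
    by apply: ereal_inf_lbound; exists X => //; rewrite (sup_tr_val HX H0) Ht.
  have M0 : (0 < M)%R by have := GM.1; lra.
  rewrite Hi lee_fin => mM.
  by rewrite -[M]invrK lef_pV2 ?posrE ?invr_gt0.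
rewrite leNgt; apply/negP => Hlt.
have s1 : 1%:E <= ereal_sup (1%:E |` [set M%:E | M in G]).
  by apply: ereal_sup_ubound; left.
move: Hlt s1; case Hs : (ereal_sup _) => [r| |] //; rewrite lte_fin lee_fin => rm r1.
have r0 : (0 < r)%R by lra.
have Hlt : ereal_inf S < (r^-1)%:E.
  by rewrite Hi lte_fin -[m]invrK ltf_pV2 ?posrE ?invr_gt0.
have [M GM rM] := K r r1 Hlt.
have : M%:E <= ereal_sup (1%:E |` [set M%:E | M in G]).
  by apply: ereal_sup_ubound; right; exists M.
rewrite Hs lee_fin => Mr; exfalso; clear Hs Hi; lra.
Qed.

End Final.

Theorem theorem4 (R : realType) (n : nat) (eps : R) (P E : set 'M[R[i]]_n) :
  0 <= eps -> eps < 1 ->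
  P `<=` @density R n -> E `<=` @density R n ->
  betaW_GPO eps P E = Dmin E eps P E.
Proof. exact: theorem4'. Qed.
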